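(* Let $X$ be a space, $Y$ a metrizable space and $\kappa$ an infinite cardinal. (a) If $X$ is a strict compact-chain of length $\kappa$, then $\mathsf{L_{cl}}(X,Y)$ holds. (b) If $X$ is countably compact and is a strict chain of length $\kappa$ of open subsets each contained in some Lindelöf subset of $X$, then $\mathsf{BR}(X,Y)$ holds. (c) In particular, if $X$ is a countably compact Type I space, then both $\mathsf{BR_{cl}}(X,Y)$ and $\mathsf{L_{cl}}(X,Y)$ hold.
   Context: All spaces are Hausdorff and maps continuous. For a property $\mathcal P$, $X$ is a strict $\mathcal P$-chain of length $\kappa$ if $X=\bigcup_{\alpha<\kappa}H_\alpha$ with $H_\alpha\subsetneq H_\beta$ for $\alpha<\beta$ and each $H_\alpha$ having $\mathcal P$. A space $X$ is of Type I if $X=\bigcup_{\alpha<\omega_1}X_\alpha$ with $X_\alpha$ open, $\overline{X_\alpha}\subset X_\beta$ for $\alpha<\beta$, $\overline{X_\alpha}$ Lindelöf, and $X\neq X_\alpha$ for all $\alpha$. For a non-Lindelöf space $X$ and a space $Y$: $\mathsf{L}(X,Y)$ means that for every continuous $f:X\to Y$ there is a Lindelöf $Z\subset X$ with $f(Z)=f(X)$; $\mathsf{BR}(X,Y)$ means that for every continuous $f:X\to Y$ there is a Lindelöf $Z\subset X$ such that $f(X\setminus W)=f(X\setminus Z)$ for every Lindelöf $W\supseteq Z$. The subscript $\mathsf{cl}$ means that $Z$ can moreover be chosen closed. (For Lindelöf $X$ these properties are regarded as trivially true.) *)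

(* Defs.v *)
From HB Require Import structures.
From mathcomp Require Import all_boot all_order.
From mathcomp Require Import all_classical all_reals all_analysis.
From Stdlib Require Import Reals.
Set Implicit Arguments. Unset Strict Implicit. Unset Printing Implicit Defensive.
Local Open Scope classical_set_scope.
Local Open Scope card_scope.

Definition strict_wellorder (I : Type) (lt : I -> I -> Prop) : Prop :=
  (forall a, ~ lt a a) /\
  (forall a b c, lt a b -> lt b c -> lt a c) /\
  (forall a b, lt a b \/ a = b \/ lt b a) /\
  well_founded lt.

(* (I, lt) is (order-isomorphic to) an infinite cardinal kappa, i.e. the set of
   ordinals alpha < kappa: an infinite well-order each of whose proper initial
   segments has strictly smaller cardinality. *)
Definition infinite_cardinal (I : Type) (lt : I -> I -> Prop) : Prop :=
  strict_wellorder lt /\ infinite_set [set: I] /\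
  forall a, ~ ([set: I] #<= [set b | lt b a]).

Definition is_omega1 (I : Type) (lt : I -> I -> Prop) : Prop :=
  strict_wellorder lt /\ ~ countable [set: I] /\
  forall a, countable [set b | lt b a].

Definition Lindelof (X : topologicalType) (A : set X) : Prop :=
  forall (I : Type) (U : I -> set X), (forall i, open (U i)) ->
    A `<=` \bigcup_i U i ->
    exists J : set I, countable J /\ A `<=` \bigcup_(i in J) U i.

Definition countably_compact (X : topologicalType) : Prop :=
  forall U : nat -> set X, (forall n, open (U n)) ->
    [set: X] `<=` \bigcup_n U n ->
    exists N : nat, [set: X] `<=` \bigcup_(n in [set m | (m < N)%N]) U n.

Definition metrizable (Y : topologicalType) : Prop :=
  exists d : Y -> Y -> R,
    (forall x y, Rle 0 (d x y)) /\
    (forall x y, d x y = 0%R <-> x = y) /\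
    (forall x y, d x y = d y x) /\
    (forall x y z, Rle (d x z) (Rplus (d x y) (d y z))) /\
    (forall A : set Y, open A <->
       forall x, A x -> exists e : R, Rlt 0 e /\ [set y | Rlt (d x y) e] `<=` A).

Definition strict_chain (X : topologicalType) (I : Type) (lt : I -> I -> Prop)
  (P : set X -> Prop) : Prop :=
  exists H : I -> set X,
    [set: X] = \bigcup_i H i /\
    (forall a b, lt a b -> H a `<` H b) /\
    (forall a, P (H a)).

Definition TypeI (X : topologicalType) : Prop :=
  exists (J : Type) (ltJ : J -> J -> Prop) (Xa : J -> set X),
    is_omega1 ltJ /\
    (forall a, open (Xa a)) /\
    (forall a b, ltJ a b -> closure (Xa a) `<=` Xa b) /\
    (forall a, Lindelof (closure (Xa a))) /\
    [set: X] = \bigcup_a Xa a /\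
    (forall a, Xa a <> [set: X]).

(* L(X,Y) / L_cl(X,Y); trivially true when X is Lindelof. *)
Definition Lprop (cl : bool) (X Y : topologicalType) : Prop :=
  Lindelof [set: X] \/
  forall f : X -> Y, continuous f ->
    exists Z : set X, Lindelof Z /\ (cl -> closed Z) /\ f @` Z = f @` [set: X].

(* BR(X,Y) / BR_cl(X,Y); trivially true when X is Lindelof. *)
Definition BRprop (cl : bool) (X Y : topologicalType) : Prop :=
  Lindelof [set: X] \/
  forall f : X -> Y, continuous f ->
    exists Z : set X, Lindelof Z /\ (cl -> closed Z) /\
      forall W : set X, Lindelof W -> Z `<=` W -> f @` (~` W) = f @` (~` Z).

(* Main.v *)
Require Import Defs.
From HB Require Import structures.
From mathcomp Require Import all_boot all_order.
From mathcomp Require Import all_classical all_reals all_analysis.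
From mathcomp Require Import finmap.
From Stdlib Require Import Rbase Rfunctions Lra.
Local Open Scope classical_set_scope.
Set Implicit Arguments. Unset Strict Implicit.

Definition ismetric (Y : topologicalType) (d : Y -> Y -> R) : Prop :=
    (forall x y, Rle 0 (d x y)) /\
    (forall x y, d x y = 0%R <-> x = y) /\
    (forall x y, d x y = d y x) /\
    (forall x y z, Rle (d x z) (Rplus (d x y) (d y z))) /\
    (forall A : set Y, open A <->
       forall x, A x -> exists e : R, Rlt 0 e /\ [set y | Rlt (d x y) e] `<=` A).

Arguments ismetric {Y} d.

Lemma metrizableE (Y : topologicalType) : metrizable Y -> exists d, @ismetric Y d.
Proof. by []. Qed.

Lemma arch (e : R) : Rlt 0 e -> exists k : nat, Rlt (/ (INR k + 1)) e.
Proof.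
move=> he; have [n hn] := INR_unbounded (/ e).
have hie : Rlt 0 (/ e) by apply: Rinv_0_lt_compat.
exists n; rewrite -[X in Rlt _ X](Rinv_inv e); apply: Rinv_lt_contravar.
  apply: Rmult_lt_0_compat => //; lra.
lra.
Qed.

Lemma inv_pos (k : nat) : Rlt 0 (/ (INR k + 1)).
Proof. apply: Rinv_0_lt_compat; have := pos_INR k; lra. Qed.

Lemma inv_anti (k N : nat) : (k <= N)%N -> Rle (/ (INR N + 1)) (/ (INR k + 1)).
Proof.
move=> /leP h; apply: Rinv_le_contravar; first by have := pos_INR k; lra.
have := le_INR _ _ h; lra.
Qed.

Lemma open_gt (Y : topologicalType) (d : Y -> Y -> R) : ismetric d ->
  forall y r, open [set z | Rlt r (d y z)].
Proof.
move=> [d0 [dE [dS [dT dO]]]] y r; apply/dO => z /= hz.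
exists (Rminus (d y z) r); split; first lra.
move=> w /= hw; have := dT y w z; rewrite (dS w z); lra.
Qed.

Lemma cc_img (X Y : topologicalType) (d : Y -> Y -> R) (f : X -> Y) (C : set X) :
  ismetric d -> countably_compact X -> continuous f -> closed C ->
  forall y, (forall e, Rlt 0 e -> exists x, C x /\ Rlt (d y (f x)) e) ->
  exists x, C x /\ f x = y.
Proof.
move=> hd cc fc cC y hy; apply: contrapT => hno.
have hd' := hd; move: hd' => [d0 [dE [dS [dT dO]]]].
pose U (n : nat) : set X := match n with
  | 0 => ~` C
  | k.+1 => f @^-1` [set z | Rlt (/ (INR k + 1)) (d y z)] end.
have Uo n : open (U n).
  case: n => [|k] /=; first exact: closed_openC.
  by move/continuousP: fc; apply; apply: open_gt.
have [|N hN] := cc U Uo.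
  move=> x _; have [Cx|nCx] := pselect (C x); last by exists 0%N.
  have fxy : f x <> y by move=> e; apply: hno; exists x.
  have : Rlt 0 (d y (f x)).
    have := d0 y (f x); have : d y (f x) <> 0%R by move/dE => /esym.
    lra.
  by move/arch => [k hk]; exists k.+1.
have [x [Cx hx]] := hy _ (inv_pos N).
have [m /= mN] := hN x I.
case: m mN => [|k] /= kN; first by [].
have := @inv_anti k N (ltnW (ltnW kN)); lra.
Qed.

Fixpoint hseq (X : Type) (x0 : X) (g : (nat -> X) * nat -> X) (n : nat) : nat -> X :=
  match n with
  | 0 => fun _ => x0
  | n.+1 => fun k => if k == n then g (hseq x0 g n, n) else hseq x0 g n k
  end.

Arguments hseq {X}.

Lemma hseqE (X : Type) (x0 : X) g N k : (k < N)%N ->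
  hseq x0 g N k = hseq x0 g k.+1 k.
Proof.
elim: N => [//|N IH] kN /=.
case: eqP => [->|ne]; first by rewrite /= eqxx.
apply: IH; by rewrite ltnS leq_eqVlt in kN; case/orP: kN => // /eqP.
Qed.

Lemma net (X Y : topologicalType) (d : Y -> Y -> R) (f : X -> Y) (x0 : X) :
  ismetric d -> countably_compact X -> continuous f -> forall r, Rlt 0 r ->
  exists (N : nat) (p : nat -> X),
    forall x, exists k, (k < N)%N /\ Rlt (d (f (p k)) (f x)) r.
Proof.
move=> hd cc fc r r0; apply: contrapT => hno.
have hd' := hd; move: hd' => [d0 [dE [dS [dT dO]]]].
have dxx z : d z z = 0%R by apply/dE.
have : forall pN : (nat -> X) * nat, exists x,
    forall k, (k < pN.2)%N -> Rle r (d (f (pN.1 k)) (f x)).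
  move=> [p N]; apply: contrapT => hx; apply: hno; exists N, p => x.
  apply: contrapT => hk; apply: hx; exists x => k kN /=.
  apply: Rnot_lt_le => hlt; apply: hk; by exists k.
move=> /choice [g hg].
pose q k := hseq x0 g k.+1 k.
have qN N : q N = g (hseq x0 g N, N) by rewrite /q /= eqxx.
have sep1 j k : (j < k)%N -> Rle r (d (f (q j)) (f (q k))).
  move=> jk; rewrite (qN k) /q -(@hseqE _ x0 g _ _ jk); exact: (hg (hseq x0 g k, k) j jk).
have sep j k : j <> k -> Rle r (d (f (q j)) (f (q k))).
  move=> ne; case: (ltngtP j k) => [jk|kj|/eqP]; first exact: sep1.
  - by rewrite dS; apply: sep1.
  - by move/eqP.
pose O (m : nat) : set Y := [set y | exists e, Rlt 0 e /\
   forall k, (m <= k)%N -> Rle (Rplus (r / 4) e) (d y (f (q k)))].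
have Oo m : open (O m).
  apply/dO => y [e [e0 he]]; exists (e / 2)%R; split; first lra.
  move=> z /= hz; exists (e / 2)%R; split; first lra.
  move=> k mk; have := he k mk; have := dT y z (f (q k)); lra.
pose V m := f @^-1` O m.
have Vo m : open (V m) by move/continuousP: fc; apply.
have [|N hN] := cc V Vo.
  move=> x _; have [[k hk]|nk] := pselect (exists k, Rlt (d (f x) (f (q k))) (r / 2)).
    exists k.+1 => //; exists (r / 4)%R; split; first lra.
    move=> k' kk'; have ne : k <> k' by move=> e; rewrite e ltnn in kk'.
    have := sep k k' ne; have := dT (f (q k)) (f x) (f (q k')); rewrite (dS (f (q k)) (f x)).
    lra.
  exists 0%N => //; exists (r / 4)%R; split; first lra.
  move=> k _; apply: Rnot_lt_le => hlt; apply: nk; exists k; lra.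
have [m /= mN [e [e0 he]]] := hN (q N) I.
have := he N (ltnW mN); rewrite dxx; lra.
Qed.

Lemma countableU2 (T : Type) (J K : set T) :
  countable J -> countable K -> countable (J `|` K).
Proof.
move=> cJ cK.
have -> : J `|` K = \bigcup_(i in [set: bool]) (if i then J else K).
  apply/seteqP; split => x.
    by case=> h; [exists true | exists false].
  by case=> [[] _ h]; [left | right].
apply: bigcup_countable; first exact: countableP.
by move=> [] _.
Qed.

Lemma cof_or_bdd (I : Type) (lt : I -> I -> Prop) :
  (forall a b, lt a b \/ a = b \/ lt b a) ->
  (exists J : set I, countable J /\ forall a, exists j, J j /\ (a = j \/ lt a j)) \/
  (forall J : set I, countable J -> exists b, forall j, J j -> lt j b).
Proof.
move=> tri; have [h|h] := pselect (exists J : set I, countable J /\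
   forall a, exists j, J j /\ (a = j \/ lt a j)); first by left.
right => J cJ; apply: contrapT => hb; apply: h; exists J; split => // a.
apply: contrapT => ha; apply: hb; exists a => j Jj.
have := tri j a; case=> [//|[e|l]]; exfalso; apply: ha; exists j; split => //.
- by left.
- by right.
Qed.

Lemma lind_bigcup (X : topologicalType) (I : Type) (J : set I) (L : I -> set X) :
  countable J -> (forall j, J j -> Lindelof (L j)) ->
  Lindelof (\bigcup_(j in J) L j).
Proof.
move=> cJ hL K U Uo hcov.
have : forall j, exists Kj : set K, J j -> countable Kj /\
   L j `<=` \bigcup_(i in Kj) U i.
  move=> j; have [Jj|nJj] := pselect (J j); last by exists set0.
  have [Kj [cKj hKj]] := hL j Jj K U Uo (fun x Lx => hcov x (ex_intro2 _ _ j Jj Lx)).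
  by exists Kj.
move=> /choice [g hg].
exists (\bigcup_(j in J) g j); split.
  by apply: bigcup_countable => // j Jj; case: (hg j Jj).
move=> x [j Jj Ljx]; have [_ h] := hg j Jj; have [i gi Ui] := h x Ljx.
by exists i => //; exists j.
Qed.

Lemma compact_cov (X : topologicalType) (a : X) (A : set X) :
  compact A -> cover_compact A.
Proof.
pose T : ptopologicalType := HB.pack_for ptopologicalType X (isPointed.Build X a).
move=> cA; have := @compact_cover T; move=> e.
have : @compact T A by exact: cA.
by rewrite e.
Qed.

Lemma compact_lind (X : topologicalType) (A : set X) : compact A -> Lindelof A.
Proof.
move=> cA I U Uo hcov.
have [[i0 _]|nI] := pselect (exists i : I, True); last first.
  exists set0; split; first exact: countable0.
  by move=> x /hcov [i _ _]; exfalso; apply: nI; exists i.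
have [[a _]|nX] := pselect (exists a : X, True); last first.
  exists set0; split; first exact: countable0.
  by move=> x; exfalso; apply: nX; exists x.
have h1 : forall V, range U V -> open (id V) by move=> V [i _ <-].
have h2 : A `<=` cover (range U) id.
  move=> x /hcov [i _ Uix]; by exists (U i) => //; exists i.
have [D' sD' hD'] := @compact_cov X a A cA (set X) (range U) id h1 h2.
have : forall V : set X, exists i : I, range U V -> U i = V.
  move=> V; have [[i _ e]|n] := pselect (range U V); first by exists i.
  by exists i0.
move=> /choice [g hg].
exists (g @` [set V | V \in D']); split.
  apply: sub_countable (card_image_le _ _) _; exact: countable_fset.
move=> x /hD' [V /= VD Vx]; exists (g V); first by exists V.
have := sD' V VD => hr; rewrite hg //; by move: hr; rewrite in_setE.
Qed.

Lemma bound2 (I : Type) (lt : I -> I -> Prop) :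
  (forall a b c, lt a b -> lt b c -> lt a c) ->
  (forall J : set I, countable J -> exists b, forall j, J j -> lt j b) ->
  forall a : nat -> nat -> I, exists b, forall n k, lt (a n k) b.
Proof.
move=> tr bdd a.
have cr (g : nat -> I) : countable (range g).
  apply: sub_countable (card_image_le _ _) _; exact: countableP.
have : forall n, exists b, forall k, lt (a n k) b.
  move=> n; have [b hb] := bdd _ (cr (a n)); exists b => k; apply: hb; by exists k.
move=> /choice [b hb]; have [c hc] := bdd _ (cr b); exists c => n k.
apply: tr (hb n k) _; apply: hc; by exists n.
Qed.

Lemma seq_bound (s : seq nat) : exists M, forall i, i \in s -> (i < M)%N.
Proof.
elim: s => [|x s [M hM]]; first by exists 0%N.
exists (maxn M x.+1) => i; rewrite in_cons => /orP [/eqP ->|/hM h].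
  by rewrite leq_max ltnSn orbT.
by rewrite leq_max h.
Qed.

Lemma lind_bound (X : topologicalType) (I : Type) (lt : I -> I -> Prop) (H : I -> set X) :
  (forall a, open (H a)) -> (forall a b, lt a b -> H a `<=` H b) ->
  (forall x, exists i, H i x) ->
  (forall J : set I, countable J -> exists b, forall j, J j -> lt j b) ->
  forall W, Lindelof W -> forall a, exists d, lt a d /\ W `<=` H d.
Proof.
move=> Ho mono cov bdd W hW a.
have hc : W `<=` \bigcup_i H i by move=> x _; have [i h] := cov x; exists i.
have [J [cJ hJ]] := hW I H Ho hc.
have [b hb] := bdd _ (@countableU2 _ _ _ cJ (countable1 a)).
exists b; split; first by apply: hb; right.
move=> x /hJ [i Ji Hix]; apply: (mono _ _ (hb i (or_introl Ji))) Hix.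
Qed.

Lemma cc_chain (X : topologicalType) (I : Type) (lt : I -> I -> Prop) (H : I -> set X) :
  (forall a, compact (H a)) -> (forall a b, lt a b -> H a `<=` H b) ->
  (forall x, exists i, H i x) ->
  (forall a b c, lt a b -> lt b c -> lt a c) ->
  (forall J : set I, countable J -> exists b, forall j, J j -> lt j b) ->
  countably_compact X.
Proof.
move=> hc mono cov tr bdd U Uo hcov; apply: contrapT => hno.
have : forall N, exists x, ~ (\bigcup_(n in [set m | (m < N)%N]) U n) x.
  move=> N; apply: contrapT => h; apply: hno; exists N => x _.
  by apply: contrapT => h'; apply: h; exists x.
move=> /choice [xs hxs].
have /choice [ai hai] := fun N => cov (xs N).
have [b hb] := @bound2 _ _ tr bdd (fun n _ => ai n).
have h2 : H b `<=` cover [set: nat] U.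
  by move=> x _; have [n _ h] := hcov x Logic.I; exists n.
have [D' _ hD'] := @compact_cov X (xs 0%N) (H b) (hc b) nat [set: nat] U
   (fun i _ => Uo i) h2.
have [M hM] := seq_bound D'.
have Hx : H b (xs M) by apply: (mono _ _ (hb M 0%N)); apply: hai.
have [i /= iD Ui] := hD' _ Hx.
apply: (hxs M); exists i => //=; apply: hM; exact: iD.
Qed.

Lemma nets (X Y : topologicalType) (d : Y -> Y -> R) (f : X -> Y) (x0 : X) :
  ismetric d -> countably_compact X -> continuous f ->
  exists p : nat -> nat -> X, forall n x, exists k,
     Rlt (d (f (p n k)) (f x)) (/ (INR n + 1)).
Proof.
move=> hd cc fc.
have : forall n, exists p : nat -> X, forall x, exists k,
     Rlt (d (f (p k)) (f x)) (/ (INR n + 1)).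
  move=> n; have [N [p hp]] := net x0 hd cc fc (inv_pos n).
  exists p => x; have [k [_ hk]] := hp x; by exists k.
by move=> /choice [p hp]; exists p.
Qed.

Lemma dens (X Y : topologicalType) (d : Y -> Y -> R) (f : X -> Y) (I : Type)
  (lt : I -> I -> Prop) (C : I -> set X) (x0 : X) :
  ismetric d -> countably_compact X -> continuous f ->
  (forall a b c, lt a b -> lt b c -> lt a c) ->
  (forall J : set I, countable J -> exists b, forall j, J j -> lt j b) ->
  (forall a b, lt a b -> C a `<=` C b) -> (forall x, exists i, C i x) ->
  (forall a, closed (C a)) ->
  exists b, f @` C b = f @` [set: X].
Proof.
move=> hd cc fc tr bdd mono cov hcl.
have hd' := hd; move: hd' => [d0 [dE [dS [dT dO]]]].
have [i0 _] := bdd _ (countable0 I).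
have [p hp] := nets x0 hd cc fc.
pose P n k a := exists x', C a x' /\ Rlt (d (f (p n k)) (f x')) (/ (INR n + 1)).
have : forall nk : nat * nat, exists a, (exists a', P nk.1 nk.2 a') -> P nk.1 nk.2 a.
  move=> [n k]; have [[a' h]|nh] := pselect (exists a', P n k a').
    by exists a'.
  by exists i0.
move=> /choice [A hA].
have [b hb] := @bound2 _ _ tr bdd (fun n k => A (n, k)).
exists b; apply/seteqP; split; first by move=> y [x _ <-]; exists x.
move=> y [x _ <-].
have [|x' [Cx' e]] := cc_img hd cc fc (hcl b) (y := f x); last by exists x'.
move=> e e0; have [n hn] : exists n : nat, Rlt (/ (INR n + 1)) (e / 2)%R by apply: arch; lra.
have [k hk] := hp n x.
have [a Ca] := cov x.
have [x'' [Cx'' h'']] := hA (n, k) (ex_intro _ a (ex_intro _ x (conj Ca hk))).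
exists x''; split; first by apply: (mono _ _ (hb n k)).
have := dT (f x) (f (p n k)) (f x''); rewrite (dS (f x) (f (p n k))); move: h'' => /= h''; lra.
Qed.

Lemma stab (X Y : topologicalType) (d : Y -> Y -> R) (f : X -> Y) (I : Type)
  (lt : I -> I -> Prop) (H : I -> set X) (x0 : X) :
  ismetric d -> countably_compact X -> continuous f ->
  (forall a b c, lt a b -> lt b c -> lt a c) ->
  (forall J : set I, countable J -> exists b, forall j, J j -> lt j b) ->
  (forall a b, lt a b -> H a `<=` H b) -> (forall a, open (H a)) ->
  exists b, forall c, lt b c -> f @` (~` H b) `<=` f @` (~` H c).
Proof.
move=> hd cc fc tr bdd mono Ho.
have hd' := hd; move: hd' => [d0 [dE [dS [dT dO]]]].
have [i0 _] := bdd _ (countable0 I).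
have [p hp] := nets x0 hd cc fc.
pose P n k a := forall x', ~ H a x' -> Rle (/ (INR n + 1)) (d (f (p n k)) (f x')).
have : forall nk : nat * nat, exists a, (exists a', P nk.1 nk.2 a') -> P nk.1 nk.2 a.
  move=> [n k]; have [[a' h]|nh] := pselect (exists a', P n k a').
    by exists a'.
  by exists i0.
move=> /choice [A hA].
have [b hb] := @bound2 _ _ tr bdd (fun n k => A (n, k)).
exists b => c bc y [x nHx <-].
have hcl : closed (~` H c) by rewrite closedC.
have [|x' [Cx' e]] := cc_img hd cc fc hcl (y := f x); last by exists x'.
move=> e e0; apply: contrapT => hno.
have [n hn] : exists n : nat, Rlt (/ (INR n + 1)) (e / 2)%R by apply: arch; lra.
have [k hk] := hp n x.
have Pc : P n k c.
  move=> x' nx'; apply: Rnot_lt_le => hlt; apply: hno; exists x'; split => //.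
  apply: Rnot_le_lt => hle.
  have := dT (f x) (f (p n k)) (f x'); rewrite (dS (f x) (f (p n k))); lra.
have := hA (n, k) (ex_intro _ c Pc) x.
have nHA : ~ H (A (n, k)) x by move=> h; apply: nHx; apply: (mono _ _ (hb n k)).
move=> /(_ nHA) /=; lra.
Qed.

Lemma BR_core (X Y : topologicalType) (d : Y -> Y -> R) (f : X -> Y) (I : Type)
  (lt : I -> I -> Prop) (H L : I -> set X) (x0 : X) :
  ismetric d -> countably_compact X -> continuous f ->
  (forall a b c, lt a b -> lt b c -> lt a c) ->
  (forall J : set I, countable J -> exists b, forall j, J j -> lt j b) ->
  (forall a b, lt a b -> H a `<=` H b) -> (forall a, open (H a)) ->
  (forall a, H a `<=` L a) -> (forall a, Lindelof (L a)) ->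
  (forall x, exists i, H i x) ->
  exists b, forall W, Lindelof W -> L b `<=` W -> f @` (~` W) = f @` (~` L b).
Proof.
move=> hd cc fc tr bdd mono Ho HL hL cov.
have [b hb] := stab x0 hd cc fc tr bdd mono Ho.
have key W : Lindelof W -> L b `<=` W -> f @` (~` W) = f @` (~` H b).
  move=> hW LW; apply/seteqP; split.
    by move=> y [x nW <-]; exists x => // h; apply: nW; apply: LW; apply: HL.
  move=> y hy.
  have [c [bc Wc]] := lind_bound Ho mono cov bdd hW b.
  have [x nHc <-] := hb c bc y hy.
  by exists x => // h; apply: nHc; apply: Wc.
exists b => W hW LW; rewrite (key W hW LW) (key (L b) (hL b)) //.
Qed.

Lemma lind_empty (X : topologicalType) : (~ exists x : X, True) -> forall A : set X, Lindelof A.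
Proof.
move=> nX A I U _ _; exists set0; split; first exact: countable0.
by move=> x; exfalso; apply: nX; exists x.
Qed.

Lemma cof_lind (X : topologicalType) (I : Type) (lt : I -> I -> Prop) (H L : I -> set X) :
  (forall a b, lt a b -> H a `<=` H b) -> (forall x, exists i, H i x) ->
  (forall a, H a `<=` L a) -> (forall a, Lindelof (L a)) ->
  (exists J : set I, countable J /\ forall a, exists j, J j /\ (a = j \/ lt a j)) ->
  Lindelof [set: X].
Proof.
move=> mono cov HL hL [J [cJ hJ]].
have -> : [set: X] = \bigcup_(j in J) L j.
  apply/seteqP; split => x // _.
  have [i Hi] := cov x; have [j [Jj [e|l]]] := hJ i; exists j => //; apply: HL.
    by rewrite -e.
  exact: (mono _ _ l).
exact: lind_bigcup.
Qed.

Lemma covE (X : topologicalType) (I : Type) (H : I -> set X) :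
  [set: X] = \bigcup_i H i -> forall x, exists i, H i x.
Proof.
move=> e x; have : (\bigcup_i H i) x by rewrite -e.
by case=> i _ h; exists i.
Qed.

Unset Implicit Arguments.

Theorem theorem5p8 (X Y : topologicalType) (I : Type) (lt : I -> I -> Prop) :
  hausdorff_space X -> metrizable Y -> infinite_cardinal lt ->
  (strict_chain lt (@compact X) -> Lprop true X Y) /\
  (countably_compact X ->
     strict_chain lt (fun H : set X => open H /\ exists L, Lindelof L /\ H `<=` L) ->
     BRprop false X Y) /\
  (countably_compact X -> TypeI X -> BRprop true X Y /\ Lprop true X Y).
Proof.
move=> hX /metrizableE [d hd] [[_ [tr [tri _]]] _].
have [[x0 _]|nX] := pselect (exists x : X, True); last first.
  have hL : Lindelof [set: X] by apply: lind_empty.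
  split; first by move=> _; left.
  split; first by move=> _ _; left.
  by move=> _ _; split; left.
split.
  move=> [H [eqH [hlt hc]]].
  have mono : forall a b, lt a b -> H a `<=` H b by move=> a b /hlt [].
  have cov := covE eqH.
  have [hcof|bdd] := cof_or_bdd tri.
    left; apply: (cof_lind mono cov (fun a => @subset_refl _ (H a))) hcof.
    by move=> a; apply: compact_lind.
  right => f fc.
  have cc := cc_chain hc mono cov tr bdd.
  have [b hb] := dens x0 hd cc fc tr bdd mono cov (fun a => compact_closed hX (hc a)).
  exists (H b); split; first exact: compact_lind.
  by split => // _; apply: compact_closed.
split.
  move=> cc [H [eqH [hlt hH]]].
  have mono : forall a b, lt a b -> H a `<=` H b by move=> a b /hlt [].
  have cov := covE eqH.
  have Ho a : open (H a) by case: (hH a).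
  have /choice [L hL] : forall a, exists L, Lindelof L /\ H a `<=` L by move=> a; case: (hH a).
  have HL a : H a `<=` L a by case: (hL a).
  have LL a : Lindelof (L a) by case: (hL a).
  have [hcof|bdd] := cof_or_bdd tri.
    by left; apply: (cof_lind mono cov HL LL) hcof.
  right => f fc.
  have [b hb] := BR_core x0 hd cc fc tr bdd mono Ho HL LL cov.
  by exists (L b); split => //.
move=> cc [J [ltJ [Xa [om [Xo [Xcl [XL [eqX _]]]]]]]].
move: om => [[_ [trJ [triJ _]]] _].
have mono : forall a b, ltJ a b -> Xa a `<=` Xa b.
  by move=> a b l x h; apply: (Xcl _ _ l); apply: subset_closure.
have monoC : forall a b, ltJ a b -> closure (Xa a) `<=` closure (Xa b).
  by move=> a b l x h; apply: subset_closure; apply: (Xcl _ _ l).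
have cov := covE eqX.
have covC : forall x, exists i, closure (Xa i) x.
  by move=> x; have [i h] := cov x; exists i; apply: subset_closure.
have HL a : Xa a `<=` closure (Xa a) by apply: subset_closure.
have [hcof|bdd] := cof_or_bdd triJ.
  have hL : Lindelof [set: X] by apply: (cof_lind mono cov HL XL) hcof.
  by split; left.
split.
  right => f fc.
  have [b hb] := BR_core x0 hd cc fc trJ bdd mono Xo HL XL cov.
  exists (closure (Xa b)); split => //; split => // _; exact: closed_closure.
right => f fc.
have [b hb] := dens x0 hd cc fc trJ bdd monoC covC (fun a => @closed_closure _ (Xa a)).
exists (closure (Xa b)); split => //; split => // _; exact: closed_closure.
Qed.
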